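(* Let $\mathbb{F}$ be a field with $\mathrm{char}(\mathbb{F})\neq 2$ and let $L$ be a finite-dimensional Lie algebra over $\mathbb{F}$ of breadth $1$. Then $L$ is nilpotent if and only if $[L,L]\subseteq Z(L)$.
   Context: For $x\in L$, $b(x)=\mathrm{rank}(\mathrm{ad}_x)$ and the breadth of $L$ is $b(L)=\max\{b(x)\mid x\in L\}$. $Z(L)$ denotes the center of $L$. *)

(* Defs.v *)
From HB Require Import structures.
From mathcomp Require Import all_boot all_order all_algebra.
Set Implicit Arguments. Unset Strict Implicit. Unset Printing Implicit Defensive.
Import GRing.Theory.
Local Open Scope ring_scope.

Definition is_lie_bracket (F : fieldType) (L : vectType F) (br : L -> L -> L) : Prop :=
  [/\ (forall x : L, linear (br x)),
      (forall y : L, linear (fun x => br x y)),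
      (forall x : L, br x x = 0) &
      (forall x y z : L, br x (br y z) + br y (br z x) + br z (br x y) = 0)].

Definition ad (F : fieldType) (L : vectType F) (br : L -> L -> L) (x : L) : 'End(L) :=
  linfun (br x).

Definition bx (F : fieldType) (L : vectType F) (br : L -> L -> L) (x : L) : nat :=
  \dim (limg (ad br x)).

Definition has_breadth (F : fieldType) (L : vectType F) (br : L -> L -> L) (n : nat) : Prop :=
  (exists x : L, bx br x = n) /\ (forall x : L, (bx br x <= n)%N).

Definition brv (F : fieldType) (L : vectType F) (br : L -> L -> L)
    (U V : {vspace L}) : {vspace L} :=
  (<< [seq br u v | u <- (vbasis U : seq L), v <- (vbasis V : seq L)] >>)%VS.

Fixpoint lcs (F : fieldType) (L : vectType F) (br : L -> L -> L) (k : nat) : {vspace L} :=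
  match k with
  | 0 => fullv
  | k'.+1 => brv br fullv (lcs br k')
  end.

Definition lie_nilpotent (F : fieldType) (L : vectType F) (br : L -> L -> L) : Prop :=
  exists k : nat, lcs br k = 0%VS.

Definition in_center (F : fieldType) (L : vectType F) (br : L -> L -> L) (z : L) : Prop :=
  forall y : L, br z y = 0.

(* Main.v *)
From HB Require Import structures.
Require Import Defs.
From mathcomp Require Import all_boot all_order all_algebra.
Set Implicit Arguments. Unset Strict Implicit. Unset Printing Implicit Defensive.
Import GRing.Theory.
Local Open Scope ring_scope.

Section Lie.
Variables (F : fieldType) (L : vectType F) (br : L -> L -> L).
Hypothesis Hb : is_lie_bracket br.

Let H1 : forall x, linear (br x). Proof. by case: Hb. Qed.
Let H2 : forall y, linear (fun x => br x y). Proof. by case: Hb. Qed.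

Definition brl x : {linear L -> L} :=
  HB.pack (br x) (GRing.isLinear.Build F L L *:%R (br x) (H1 x)).
Definition brr y : {linear L -> L} :=
  HB.pack (fun x => br x y) (GRing.isLinear.Build F L L *:%R (fun x => br x y) (H2 y)).
Lemma brlE x y : brl x y = br x y. Proof. by []. Qed.
Lemma brrE x y : brr y x = br x y. Proof. by []. Qed.

Lemma brDl x y z : br (x + y) z = br x z + br y z.
Proof. by rewrite -!brrE linearD. Qed.
Lemma brDr x y z : br x (y + z) = br x y + br x z.
Proof. by rewrite -!brlE linearD. Qed.

Lemma adE x y : ad br x y = br x y.
Proof. rewrite /ad; change (linfun (brl x) y = brl x y); exact: lfunE. Qed.

Lemma br_anti x y : br x y = - br y x.
Proof.
case: Hb => _ _ Hxx _.
have e : br (x + y) (x + y) = br x x + br x y + (br y x + br y y).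
  by rewrite -brrE linearD /= -!brlE !linearD.
move: (Hxx (x + y)); rewrite e !Hxx add0r addr0 => /eqP.
by rewrite addr_eq0 => /eqP.
Qed.

Lemma br_mem (U V : {vspace L}) u v : u \in U -> v \in V -> br u v \in brv br U V.
Proof.
move=> uU vV.
rewrite (coord_vbasis vV) -brlE linear_sum.
apply: memv_suml => j _; rewrite linearZ brlE; apply: memvZ.
rewrite (coord_vbasis uU) -brrE linear_sum.
apply: memv_suml => i _; rewrite linearZ brrE; apply: memvZ.
apply: memv_span; apply/allpairsP; exists ((vbasis U)`_i, (vbasis V)`_j) => /=.
by rewrite !mem_nth ?size_tuple.
Qed.

Lemma iter_lcs n x y : iter n (br x) y \in lcs br n.
Proof.
elim: n => [|n IH]; first exact: memvf.
rewrite iterS; exact: (br_mem (memvf x) IH).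
Qed.

Hypothesis Hnil : lie_nilpotent br.
Hypothesis Hb1 : forall x, (bx br x <= 1)%N.

Lemma im_line x v : v != 0 -> v \in limg (ad br x) -> limg (ad br x) = <[v]>%VS.
Proof.
move=> v0 vI; symmetry; apply/eqP.
by rewrite eqEdim dim_vline v0 Hb1 andbT -memvE.
Qed.

Lemma inIm x y : br x y \in limg (ad br x).
Proof. by rewrite -adE memv_img ?memvf. Qed.

Lemma ad2 x y : br x (br x y) = 0.
Proof.
case: Hnil => n Hn.
have Hit z : iter n (br x) z = 0.
  by have := iter_lcs n x z; rewrite Hn memv0 => /eqP.
set v := br x y.
have [->|v0] := eqVneq v 0; first by rewrite -brlE linear0.
have := inIm x v; rewrite (im_line v0 (inIm x y)) => /vlineP [k Hk].
have Hm m : iter m (br x) v = k ^+ m *: v.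
  elim: m => [|m IH]; first by rewrite scale1r.
  rewrite iterS IH -brlE linearZ brlE Hk /=; by rewrite scalerA exprSr.
have := Hit v; rewrite Hm => /eqP; rewrite scaler_eq0 (negbTE v0) orbF.
by rewrite expf_eq0 => /andP [_ /eqP k0]; rewrite Hk k0 scale0r.
Qed.

Lemma lin2 x y z : br x (br y z) = - br y (br x z).
Proof.
have e : br (x + y) (br (x + y) z) =
   br x (br x z) + br x (br y z) + (br y (br x z) + br y (br y z)).
  by rewrite !brDl !brDr.
move: (ad2 (x + y) z); rewrite e !ad2 add0r addr0 => /eqP.
by rewrite addr_eq0 => /eqP.
Qed.

Lemma key x y z : br x (br y z) = 0.
Proof.
have [t0|t0] := eqVneq (br y (br x z)) 0; first by rewrite lin2 t0 oppr0.
have := inIm y z; rewrite (im_line t0 (inIm y (br x z))) => /vlineP [k ->].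
rewrite -brlE linearZ brlE lin2 ad2.
rewrite -[br y 0](brlE y) linear0 oppr0 /=; exact: scaler0.
Qed.

End Lie.

Theorem proposition2p3 (F : fieldType) (L : vectType F) (br : L -> L -> L) :
  ~~ (2%N \in [pchar F]) ->
  is_lie_bracket br ->
  has_breadth br 1 ->
  (lie_nilpotent br <->
   (forall z : L, z \in brv br fullv fullv -> in_center br z)).
Proof.
move=> _ Hb [_ Hb1]; split.
- move=> Hnil z zin y.
  have : (brv br fullv fullv <= lker (linfun (brr Hb y)))%VS.
    apply/span_subvP => w /allpairsP [[u v] [_ _ ->]] /=.
    by rewrite memv_ker (lfunE (brr Hb y)) brrE br_anti // key // oppr0.
  by move/subvP/(_ z zin); rewrite memv_ker (lfunE (brr Hb y)) brrE => /eqP.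
- move=> Hc; exists 2%N.
  change (brv br fullv (brv br fullv fullv) = 0%VS).
  apply/eqP; rewrite -subv0; apply/span_subvP => w /allpairsP [[u v] [_ vin ->]] /=.
  by rewrite memv0 br_anti // Hc ?oppr0 // (vbasis_mem vin).
Qed.
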